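(* Let $H\in\mathbb{N}$, let $\{\mathcal{F}_h^k\}_{k\in\mathbb{N},h\in[H]}$ be a filtration that is increasing in the lexicographic order of $(k,h)$ (i.e. $\mathcal{F}_1^1\subseteq\mathcal{F}_2^1\subseteq\dots\subseteq\mathcal{F}_H^1\subseteq\mathcal{F}_1^2\subseteq\cdots$), and let $\{X_h^k\}$ be non-negative random variables with $X_h^k$ being $\mathcal{F}_h^k$-measurable. Let $c>0$ be a constant, and define recursively $J_{H+1}^k:=0$ and $J_h^k:=\big(X_h^k+\mathbb{E}[J_{h+1}^k\mid\mathcal{F}_h^k]\big)\wedge c$ for all $k\in\mathbb{N}$, $h\in[H]$. Then for any $\delta\in(0,1]$, with probability at least $1-\delta$, simultaneously for all $K\in\mathbb{N}$, $$\sum_{k=1}^KJ_1^k\le2\sum_{k=1}^K\sum_{h=1}^HX_h^k+6c\log\frac2\delta.$$ *)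

(* Defs.v *)
From HB Require Import structures.
From mathcomp Require Import all_boot all_order all_algebra.
From mathcomp Require Import all_classical all_reals all_analysis.
Set Implicit Arguments. Unset Strict Implicit. Unset Printing Implicit Defensive.
Import Order.TTheory GRing.Theory Num.Theory.
Local Open Scope classical_set_scope.
Local Open Scope ring_scope.

Definition is_sub_sigma_algebra d (T : measurableType d) (G : set (set T)) : Prop :=
  sigma_algebra setT G /\ (forall A, G A -> measurable A).

Definition G_measurable d (T : measurableType d) (R : realType)
    (G : set (set T)) (Y : T -> R) : Prop :=
  forall B : set R, measurable B -> G (Y @^-1` B).

Definition cond_exp_version d (T : measurableType d) (R : realType)
    (P : probability T R) (G : set (set T)) (Z Y : T -> R) : Prop :=
  [/\ G_measurable G Y,
      P.-integrable setT (EFin \o Y) &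
      forall A, G A -> (\int[P]_(x in A) (Y x)%:E = \int[P]_(x in A) (Z x)%:E)%E].

(* Main.v *)
Require Import Defs.
From HB Require Import structures.
From mathcomp Require Import all_boot all_order all_algebra.
From mathcomp Require Import all_classical all_reals all_analysis.
From mathcomp Require Import measurable_realfun lebesgue_Rintegral.
From mathcomp Require Import ring lra.
Import Order.TTheory GRing.Theory Num.Theory.
Local Open Scope classical_set_scope.
Local Open Scope ring_scope.

Set Implicit Arguments. Unset Strict Implicit. Unset Printing Implicit Defensive.


Section S.
Context (R : realType).

Definition stair (m : nat) (y : R) : R := \sum_(i < m) (if (i.+1)%:R <= y then 1 else 0).

Lemma stair_full m y : m%:R <= y -> stair m y = m%:R.
Proof.
elim: m => [|m IH] h; first by rewrite /stair big_ord0.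
rewrite /stair big_ord_recr /= -/(stair m y) IH; last first.
  by apply: le_trans h; rewrite ler_nat.
by by rewrite h -natr1.
Qed.

Lemma stairP m y : 0 <= y <= m%:R -> stair m y <= y <= stair m y + 1.
Proof.
elim: m y => [|m IH] y /andP[y0 ym].
  have -> : y = 0 by apply/le_anti; rewrite ym y0.
  by rewrite /stair big_ord0 lexx add0r ler01.
rewrite /stair big_ord_recr /= -/(stair m y).
have [yle|ygt] := leP y m%:R.
  have -> : ((m.+1)%:R <= y) = false.
    by apply/negbTE; rewrite -ltNge (le_lt_trans yle)// ltr_nat.
  by rewrite addr0; apply: IH; rewrite y0 yle.
rewrite stair_full; last exact: ltW.
case: (boolP ((m.+1)%:R <= y)) => h.
  have -> : y = m.+1%:R by apply/le_anti; rewrite ym h.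
  by rewrite -natr1 lexx /= lerDl ler01.
by rewrite addr0 (ltW ygt) /= natr1 ym.
Qed.
End S.
Section HA.
Context d (T : measurableType d) (R : realType) (P : probability T R).

Lemma int_bnd (f : T -> R) (b : R) : measurable_fun setT f ->
  (forall x, `|f x| <= b) -> P.-integrable setT (EFin \o f).
Proof.
move=> mf fb.
apply: (le_integrable _ _ _ (finite_measure_integrable_cst P b _)) => //.
  exact/measurable_EFinP.
move=> x _ /=; rewrite lee_fin (le_trans (fb x))//.
exact: ler_norm.
Qed.

Lemma int_bndM (f g : T -> R) (b : R) : measurable_fun setT f ->
  (forall x, `|f x| <= b) -> P.-integrable setT (EFin \o g) ->
  P.-integrable setT (EFin \o (fun x => f x * g x)).
Proof.
move=> mf fb ig.
have b0 : 0 <= b by apply: le_trans (fb point).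
have ibg : P.-integrable setT (EFin \o (fun x => b * g x)).
  apply: eq_integrable (integrableZl _ b ig) => // x _ /=.
apply: (le_integrable _ _ _ ibg) => //.
  apply/measurable_EFinP; apply: measurable_funM => //.
  exact/measurable_EFinP/(measurable_int P ig).
move=> x _ /=; rewrite lee_fin !normrM (ger0_norm b0).
by rewrite ler_wpM2r.
Qed.
End HA.
Section HB.
Context d (T : measurableType d) (R : realType).

Definition Gm (G : set (set T)) (f : T -> R) :=
  measurable_fun (setT : set (g_sigma_algebraType G)) (f : g_sigma_algebraType G -> R).

Lemma Gm_setP G (A : set T) : sigma_algebra setT G ->
  (measurable (A : set (g_sigma_algebraType G)) <-> G A).
Proof.
move=> sG; change (<<s G >> A <-> G A).
by rewrite sigma_algebra_id.
Qed.

Lemma GmP G f : sigma_algebra setT G -> G_measurable G f <-> Gm G f.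
Proof.
move=> sG; split.
  move=> Gf _ B mB; rewrite setTI.
  exact: sub_sigma_algebra (Gf B mB).
move=> Gf B mB; have := Gf measurableT B mB; rewrite setTI.
change (<<s G >> (f @^-1` B) -> G (f @^-1` B)).
by rewrite sigma_algebra_id.
Qed.

Lemma Gm_sub G G' f : sigma_algebra setT G -> sigma_algebra setT G' ->
  G `<=` G' -> Gm G f -> Gm G' f.
Proof.
move=> sG sG' GG' /(GmP _ sG) Gf; apply/(GmP _ sG') => B mB.
exact/GG'/Gf.
Qed.

Lemma Gm_meas G f : sigma_algebra setT G -> G `<=` measurable ->
  Gm G f -> measurable_fun setT f.
Proof.
move=> sG GT /(GmP _ sG) Gf _ B mB; rewrite setTI; exact/GT/Gf.
Qed.
End HB.

Section MSum.
Context (R : realType).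
Lemma msum_nat d' (T' : measurableType d') (f : nat -> T' -> R) m n :
  (forall i, (m <= i < n)%N -> measurable_fun setT (f i)) ->
  measurable_fun setT (fun x => \sum_(m <= i < n) f i x).
Proof.
elim: n => [|n IH] hf.
  rewrite (_ : (fun x => _) = cst 0); first exact: measurable_cst.
  by apply/funext => x; rewrite big_geq.
case: (leqP m n) => mn.
  rewrite (_ : (fun x => _) = (fun x => \sum_(m <= i < n) f i x + f n x)); last first.
    by apply/funext => x; rewrite big_nat_recr.
  apply: measurable_funD.
    by apply: IH => i /andP[mi i_n]; apply: hf; rewrite mi ltnS ltnW.
  by apply: hf; rewrite mn ltnS leqnn.
rewrite (_ : (fun x => _) = cst 0); first exact: measurable_cst.
by apply/funext => x; rewrite big_geq.
Qed.

Lemma Rint_aff d' (T' : measurableType d') (P : probability T' R)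
    (W g : T' -> R) (b a : R) :
  measurable_fun setT W -> (forall x, `|W x| <= b) ->
  P.-integrable setT (EFin \o g) ->
  \int[P]_x (W x * (1 - a * g x)) =
  \int[P]_x W x - a * \int[P]_x (W x * g x).
Proof.
move=> mW Wb ig.
have iW : P.-integrable setT (EFin \o W) := int_bnd P mW Wb.
have iWg : P.-integrable setT (EFin \o (fun x => W x * g x)) := int_bndM mW Wb ig.
rewrite -RintegralZl // -RintegralB //; last first.
  by apply: (integrableZl _ _ iWg).
by apply: eq_Rintegral => x _; rewrite mulrBr mulr1 mulrCA.
Qed.
End MSum.


Section Pullout.
Context d (T : measurableType d) (R : realType) (P : probability T R).
Variables (G : set (set T)) (sG : sigma_algebra setT G) (GT : G `<=` measurable).
Variables (Y Z : T -> R).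
Hypotheses (iY : P.-integrable setT (EFin \o Y)) (iZ : P.-integrable setT (EFin \o Z)).
Hypothesis hYZ : forall A, G A ->
  (\int[P]_(x in A) (Y x)%:E = \int[P]_(x in A) (Z x)%:E)%E.

Let mY : measurable_fun setT Y.
Proof. exact/measurable_EFinP/(measurable_int P iY). Qed.
Let mZ : measurable_fun setT Z.
Proof. exact/measurable_EFinP/(measurable_int P iZ). Qed.

Lemma pull_indic (B : set T) : G B ->
  \int[P]_x (\1_B x * Y x) = \int[P]_x (\1_B x * Z x).
Proof.
move=> GB.
have E (f : T -> R) : \int[P]_x (\1_B x * f x) = \int[P]_(x in B) f x.
  rewrite [RHS]Rintegral_mkcond; apply: eq_Rintegral => x _.
  by rewrite /patch indicE; case: ifP => _; rewrite ?mul1r ?mul0r.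
by rewrite !E /Rintegral hYZ.
Qed.

Lemma pull_sum (B : nat -> set T) (m : nat) : (forall i, G (B i)) ->
  \int[P]_x ((\sum_(i < m) \1_(B i) x) * Y x) =
  \int[P]_x ((\sum_(i < m) \1_(B i) x) * Z x).
Proof.
move=> GB; elim: m => [|m IH].
  by under eq_Rintegral do rewrite big_ord0 mul0r;
     under [RHS]eq_Rintegral do rewrite big_ord0 mul0r.
have ms : measurable_fun setT (fun x => \sum_(i < m) \1_(B i) x : R).
  by apply: measurable_sum => i; apply: measurable_indic; exact: GT.
have bs : forall x, `|\sum_(i < m) \1_(B i) x : R| <= m%:R.
  move=> x; apply: (le_trans (ler_norm_sum _ _ _)).
  apply: (@le_trans _ _ (\sum_(i < m) (1:R))); last by rewrite sumr_const card_ord.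
  apply: ler_sum => i _.
  by rewrite indicE; case: (_ \in _); rewrite ?normr1 ?normr0.
have mi : measurable_fun setT (\1_(B m) : T -> R).
  by apply: measurable_indic; exact: GT.
have bi : forall x, `|\1_(B m) x : R| <= 1.
  by move=> x; rewrite indicE; case: (_ \in _); rewrite ?normr1 ?normr0.
under eq_Rintegral do rewrite big_ord_recr /= mulrDl.
under [RHS]eq_Rintegral do rewrite big_ord_recr /= mulrDl.
rewrite RintegralD //; [|exact: int_bndM ms bs iY|exact: int_bndM mi bi iY].
rewrite RintegralD //; [|exact: int_bndM ms bs iZ|exact: int_bndM mi bi iZ].
by rewrite IH pull_indic.
Qed.

Lemma Rint_abs_bound (f g : T -> R) (e : R) : measurable_fun setT f ->
  (forall x, `|f x| <= e) -> P.-integrable setT (EFin \o g) ->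
  `|\int[P]_x (f x * g x)| <= e * \int[P]_x `|g x|.
Proof.
move=> mf fe ig.
have e0 : 0 <= e by apply: le_trans (fe point).
apply: le_trans (le_normr_Rintegral _ (int_bndM mf fe ig)) _ => //.
rewrite -RintegralZl //; last exact: integrable_norm.
apply: le_Rintegral => //.
- exact: integrable_norm (int_bndM mf fe ig).
- by apply: (integrableZl _ e (integrable_norm ig)).
by move=> x _; rewrite normrM ler_wpM2r.
Qed.

Lemma pullout (W : T -> R) (b : R) : Gm G W -> (forall x, 0 <= W x <= b) ->
  \int[P]_x (W x * Y x) = \int[P]_x (W x * Z x).
Proof.
move=> GW Wb.
have mW : measurable_fun setT W := Gm_meas sG GT GW.
set K := \int[P]_x `|Y x| + \int[P]_x `|Z x|.
have key n : `|\int[P]_x (W x * Y x) - \int[P]_x (W x * Z x)| <= (n.+1%:R)^-1 * K.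
  set bn := (Num.truncn b).+1.
  have bbn : b <= bn%:R by apply/ltW/truncnS_gt.
  set m := (n.+1 * bn)%N.
  pose B i := [set x | (i.+1)%:R <= n.+1%:R * W x].
  have GWn : Gm G (fun x => n.+1%:R * W x).
    by apply: measurable_funM => //; exact: measurable_cst.
  have GB i : G (B i).
    apply/Gm_setP => //.
    have := GWn measurableT `[(i.+1)%:R, +oo[%classic (measurable_itv _).
    rewrite setTI; congr measurable; apply/seteqP; split => x /=;
      by rewrite in_itv /= andbT.
  have Bi i x : \1_(B i) x = if (i.+1)%:R <= n.+1%:R * W x then 1 else 0 :> R.
    rewrite indicE; case: ifPn => h; first by rewrite mem_set.
    by rewrite memNset //= ; apply/negP.
  pose V x := \sum_(i < m) \1_(B i) x : R.
  have VE x : V x = stair m (n.+1%:R * W x).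
    by rewrite /V /stair; apply: eq_bigr => i _; rewrite Bi.
  have n0 : 0 < n.+1%:R :> R by rewrite ltr0n.
  pose S x := (n.+1%:R)^-1 * V x.
  have mV : measurable_fun setT V.
    by apply: measurable_sum => i; apply: measurable_indic; exact: GT.
  have mS : measurable_fun setT S by apply: measurable_funM => //; exact: measurable_cst.
  have SW x : `|W x - S x| <= (n.+1%:R)^-1.
    have := @stairP R m (n.+1%:R * W x).
    case/andP: (Wb x) => W0 Wb'.
    rewrite mulr_ge0 ?ler0n //= -VE.
    have -> : n.+1%:R * W x <= m%:R.
      rewrite /m natrM ler_wpM2l ?ler0n //; exact: le_trans Wb' bbn.
    move=> /(_ isT) /andP[h1 h2].
    have -> : W x - S x = (n.+1%:R)^-1 * (n.+1%:R * W x - V x).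
      by rewrite /S mulrBr mulKf // lt0r_neq0.
    rewrite normrM ger0_norm ?invr_ge0 ?ler0n // -[X in _ <= X]mulr1.
    rewrite ler_wpM2l ?invr_ge0 ?ler0n // ler_norml; apply/andP; split; lra.
  have mWS : measurable_fun setT (fun x => W x - S x) by apply: measurable_funB.
  have bV x : `|V x| <= m%:R.
    apply: (le_trans (ler_norm_sum _ _ _)).
    apply: (@le_trans _ _ (\sum_(i < m) (1:R))); last by rewrite sumr_const card_ord.
    apply: ler_sum => i _.
    by rewrite indicE; case: (_ \in _); rewrite ?normr1 ?normr0.
  have bVn x : `|S x| <= (n.+1%:R)^-1 * m%:R.
    rewrite /S normrM ger0_norm ?invr_ge0 ?ler0n // ler_wpM2l ?invr_ge0 ?ler0n //.
  have bW x : `|W x| <= b.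
    by case/andP: (Wb x) => W0 Wb'; rewrite ger0_norm.
  have split_ (F : T -> R) : P.-integrable setT (EFin \o F) ->
      \int[P]_x (W x * F x) = \int[P]_x ((W x - S x) * F x) + (n.+1%:R)^-1 * \int[P]_x (V x * F x).
    move=> iF.
    rewrite -RintegralZl //; last exact: int_bndM mV bV iF.
    rewrite -RintegralD //; last first.
    - by apply: (integrableZl _ _ (int_bndM mV bV iF)).
    - exact: int_bndM mWS SW iF.
    apply: eq_Rintegral => x _; rewrite /S; ring.
  rewrite (split_ _ iY) (split_ _ iZ) (pull_sum _ GB).
  rewrite opprD addrACA subrr addr0.
  apply: (le_trans (ler_normB _ _)).
  rewrite /K mulrDr lerD //; exact: Rint_abs_bound.
have K0 : 0 <= K by rewrite /K addr_ge0 // Rintegral_ge0.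
apply/eqP; rewrite -subr_eq0 -normr_eq0; apply/eqP/le_anti.
rewrite normr_ge0 andbT leNgt; apply/negP => D0.
set D := `|_ - _| in D0 key.
set n := Num.truncn (K / D).
have h1 : K / D < n.+1%:R := truncnS_gt _.
have h2 : (n.+1%:R)^-1 * K < D.
  by rewrite mulrC ltr_pdivrMr ?ltr0n // mulrC -ltr_pdivrMr.
by have := key n; rewrite leNgt h2.
Qed.

End Pullout.


Section Ineq.
Context (R : realType).

Lemma expR_1B (a : R) : expR a * (1 - a) <= 1.
Proof.
have h := expR_ge1Dx (- a).
have e0 := expR_gt0 a.
apply: (@le_trans _ _ (expR a * expR (- a))); first by apply: ler_wpM2l; [exact: ltW|].
by rewrite -expRD subrr expR0.
Qed.

Lemma key_ineq (c x y : R) : 0 < c -> 0 <= x ->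
  expR (- (2 * (2 * c)^-1 * x)) * (1 - (2 * c)^-1 * y)
  <= 1 - (2 * c)^-1 * Num.min (x + y) c.
Proof.
move=> c0 x0.
set l := (2 * c)^-1.
have l0 : 0 < l by rewrite invr_gt0 mulr_gt0.
have lc : l * c = 2^-1 by rewrite /l invfM -mulrA mulVf ?lt0r_neq0 // mulr1.
set m := Num.min (x + y) c.
have mc : m <= c by rewrite /m ge_min lexx orbT.
have mxy : m <= x + y by rewrite /m ge_min lexx.
set e := expR _.
have e0 : 0 < e := expR_gt0 _.
have e1 : e <= 1 by rewrite /e -[X in _ <= X]expR0 ler_expR oppr_le0 mulr_ge0 // mulr_ge0 // ltW.
have lm : l * m <= 2^-1 by rewrite -lc; apply: ler_wpM2l => //; exact: ltW.
have [yc|yc] := leP c y.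
  have ly : 2^-1 <= l * y by rewrite -lc; apply: ler_wpM2l => //; exact: ltW.
  have h : e * (1 - l * y) <= e * 2^-1.
    by apply: ler_wpM2l; [exact: ltW|lra].
  apply: le_trans h _.
  apply: (@le_trans _ _ (2^-1)); first by rewrite -[X in _ <= X]mul1r; apply: ler_wpM2r.
  lra.
have my : y <= m by rewrite /m le_min (ltW yc) andbT lerDr.
set u := m - y.
have u0 : 0 <= u by rewrite subr_ge0.
have ux : u <= x by rewrite /u lerBlDr.
set E := expR (2 * l * u).
have E1 : 1 + 2 * l * u <= E := expR_ge1Dx _.
have E0 : 0 < E := expR_gt0 _.
have eE : e * E <= 1.
  rewrite /e /E -expRD -[X in _ <= X]expR0 ler_expR.
  have : 2 * l * u <= 2 * l * x by apply: ler_wpM2l => //; rewrite mulr_ge0 // ltW.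
  lra.
have ly : 0 < 1 - l * y.
  have : l * y < 2^-1 by rewrite -lc ltr_pM2l.
  lra.
have h1 : 1 - l * y <= E * (1 - l * m).
  apply: (@le_trans _ _ ((1 + 2 * l * u) * (1 - l * m))).
    have : l * u * (1 - l * m) >= l * u * 2^-1.
      by apply: ler_wpM2l; [rewrite mulr_ge0 // ltW|lra].
    rewrite /u; nra.
  by apply: ler_wpM2r; lra.
rewrite -(ler_pM2r E0).
apply: (@le_trans _ _ (1 - l * y)).
  rewrite mulrAC -[X in _ <= X]mul1r; apply: ler_wpM2r => //; exact: ltW.
by rewrite [X in _ <= X]mulrC.
Qed.

End Ineq.


Section Ville.
Context d (T : measurableType d) (R : realType) (P : probability T R).
Variables (Gs : nat -> set (set T)).
Hypotheses (sGs : forall k, sigma_algebra setT (Gs k)) (GsT : forall k, Gs k `<=` measurable).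
Variables (N : nat -> T -> R) (t : R).
Hypotheses (t0 : 0 < t) (N0 : forall x, N 0 x = 1) (Nge0 : forall k x, 0 <= N k x)
 (Nb : forall k, exists b, forall x, N k x <= b)
 (NG : forall j k, (j <= k)%N -> Gm (Gs k) (N j))
 (Nsup : forall k A, Gs k A ->
    \int[P]_x (N k.+1 x * \1_A x) <= \int[P]_x (N k x * \1_A x)).

Let mN j : measurable_fun setT (N j) := Gm_meas (sGs j) (@GsT j) (NG (leqnn j)).

Definition Ast k := [set x | forall j, (j <= k)%N -> N j x < t].

Lemma Ast_G k : Gs k (Ast k).
Proof.
apply/(Gm_setP _ (sGs k)).
have -> : Ast k = \bigcap_j [set x | (j <= k)%N -> N j x < t].
  apply/seteqP; split => x h j; [move=> _ jk; exact: h| move=> jk; exact: h].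
apply: bigcapT_measurable => j.
case: (leqP j k) => jk.
  have := NG jk measurableT (measurable_itv `]-oo, t[).
  rewrite setTI; congr measurable; apply/seteqP; split => x /=.
    by rewrite in_itv /= => h _.
  by rewrite in_itv /=; apply.
by rewrite (_ : [set x | _] = setT) //; apply/seteqP; split => x.

Qed.

Let mAst k : measurable (Ast k) := @GsT k _ (Ast_G k).

Fixpoint Q k : T -> R :=
  match k with
  | 0 => N 0
  | k'.+1 => fun x => \1_(Ast k') x * N k'.+1 x + (1 - \1_(Ast k') x) * Q k' x
  end.

Lemma Q_meas k : measurable_fun setT (Q k).
Proof.
elim: k => [|k IH] /=; first exact: mN.
apply: measurable_funD; apply: measurable_funM.
- exact: measurable_indic (mAst k).
- exact: mN.
- apply: measurable_funB; [exact: measurable_cst|exact: measurable_indic (mAst k)].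
- exact: IH.
Qed.

Lemma Q_bnd k : exists b, forall x, 0 <= Q k x <= b.
Proof.
elim: k => [|k [b IH]] /=.
  by exists 1 => x; rewrite N0 ler01 lexx.
have [b' hb'] := Nb k.+1.
exists (b + b') => x; rewrite indicE.
have := IH x; have := Nge0 k.+1 x; have := hb' x.
case: (_ \in _) => /=; rewrite ?subrr ?subr0 ?mul0r ?mul1r ?addr0 ?add0r.
  move=> h1 h2 /andP[h3 h4]; rewrite h2 /=; lra.
move=> h1 h2 /andP[h3 h4]; rewrite h3 /=; lra.
Qed.

Lemma Q_N k x : Ast k x -> Q k x = N k x.
Proof.
case: k => [//|k] /= h.
have hk : Ast k x by move=> j jk; apply: h; exact: leqW.
by rewrite indicE mem_set // mul1r subrr mul0r addr0.
Qed.

Lemma Q_int_bnd k : P.-integrable setT (EFin \o Q k).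
Proof.
have [b hb] := Q_bnd k.
have hQ : forall x, `|Q k x| <= b.
  by move=> x; case/andP: (hb x) => h1 h2; rewrite ger0_norm.
exact: int_bnd (Q_meas k) hQ.
Qed.

Lemma Q_int k : \int[P]_x Q k x <= 1.
Proof.
elim: k => [|k IH] /=.
  under eq_Rintegral do rewrite N0.
  rewrite Rintegral_cst // mul1r.
  have h1 := probability_setT P. have -> : fine (P [set: T]) = 1 by rewrite h1. by [].
apply: le_trans IH.
have [bN hbN] := Nb k.+1.
have [bN' hbN'] := Nb k.
have bi : forall x, `|\1_(Ast k) x : R| <= 1.
  by move=> x; rewrite indicE; case: (_ \in _); rewrite ?normr1 ?normr0.
have bi' : forall x, `|1 - \1_(Ast k) x : R| <= 1.
  by move=> x; rewrite indicE; case: (_ \in _); rewrite ?subrr ?subr0 ?normr1 ?normr0.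
have mi : measurable_fun setT (\1_(Ast k) : T -> R) by exact: measurable_indic (mAst k).
have mi' : measurable_fun setT (fun x => 1 - \1_(Ast k) x : R).
  by apply: measurable_funB; [exact: measurable_cst|].
have iN j : P.-integrable setT (EFin \o N j).
  have [b hb] := Nb j.
  have hQ : forall x, `|N j x| <= b by move=> x; rewrite ger0_norm.
  exact: int_bnd (mN j) hQ.
rewrite RintegralD //; [|exact: int_bndM mi bi (iN _)|exact: int_bndM mi' bi' (Q_int_bnd k)].
have -> : \int[P]_x (\1_(Ast k) x * N k.+1 x) = \int[P]_x (N k.+1 x * \1_(Ast k) x).
  by apply: eq_Rintegral => x _; rewrite mulrC.
apply: le_trans (lerD (Nsup (Ast_G k)) (lexx _)) _.
have -> : \int[P]_x (N k x * \1_(Ast k) x) = \int[P]_x (\1_(Ast k) x * Q k x).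
  apply: eq_Rintegral => x _; rewrite mulrC indicE.
  by case: (boolP (x \in Ast k)) => h; rewrite ?mul0r ?mul1r // Q_N //; apply/set_mem.
rewrite -RintegralD //; [|exact: int_bndM mi bi (Q_int_bnd _)|exact: int_bndM mi' bi' (Q_int_bnd k)].
by rewrite le_eqVlt; apply/orP; left; apply/eqP; apply: eq_Rintegral => x _; ring.
Qed.

Lemma Q_big K x : (exists2 j, (j <= K)%N & t <= N j x) -> t <= Q K x.
Proof.
elim: K => [|K IH] [j jK tj] /=.
  by move: jK; rewrite leqn0 => /eqP jK; subst j.
case: (boolP (x \in Ast K)) => h.
  rewrite indicE h mul1r subrr mul0r addr0.
  move: jK; rewrite leq_eqVlt => /orP[/eqP jE|jK]; first by subst j.
  have := set_mem h j jK; rewrite ltNge tj //.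
rewrite indicE (negbTE h) mul0r add0r subr0 mul1r.
apply: IH.
move/negP: h; rewrite in_setE => /existsNP[i].
move/not_implyP => [iK /negP]; rewrite -leNgt => ti.
by exists i.
Qed.

Definition Bev K := [set x | exists2 j, (j <= K)%N & t <= N j x].

Lemma Bev_meas K : measurable (Bev K).
Proof.
have -> : Bev K = \bigcup_j [set x | (j <= K)%N /\ t <= N j x].
  apply/seteqP; split => x /=; first by move=> [j jK tj]; exists j.
  by move=> [j _ [jK tj]]; exists j.
apply: bigcupT_measurable => j.
case: (leqP j K) => jK.
  have := mN j measurableT (measurable_itv `[t, +oo[).
  rewrite setTI; congr measurable; apply/seteqP; split => x /=.
    by rewrite in_itv /= andbT => h.
  by rewrite in_itv /= andbT => -[].
by rewrite (_ : [set x | _] = set0) //; apply/seteqP; split => x // [].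
Qed.

Lemma Ville_fin K : (P (Bev K) <= (t^-1)%:E)%E.
Proof.
have mB := Bev_meas K.
have -> : P (Bev K) = (\int[P]_x (\1_(Bev K) x : R))%:E.
  rewrite /Rintegral integral_indic // setIT fineK //.
  exact: fin_num_measure.
rewrite lee_fin.
have [b hb] := Q_bnd K.
have hQ : forall x, `|Q K x| <= b.
  by move=> x; case/andP: (hb x) => h1 h2; rewrite ger0_norm.
have iQ := Q_int_bnd K.
apply: (@le_trans _ _ (\int[P]_x (t^-1 * Q K x))).
  apply: le_Rintegral => //.
  - exact: integrable_indic.
  - by apply: (integrableZl _ _ iQ).
  move=> x _; rewrite indicE.
  case: (boolP (x \in Bev K)) => h.
    rewrite ler_pdivlMl // mulr1; apply: Q_big; exact: set_mem.
  by apply: mulr_ge0; [rewrite invr_ge0 ltW | case/andP: (hb x)].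
rewrite RintegralZl // -[X in _ <= X]mulr1.
apply: ler_wpM2l; first by rewrite invr_ge0 ltW.
exact: Q_int.
Qed.

Lemma Ville : (P (\bigcup_K Bev K) <= (t^-1)%:E)%E.
Proof.
have nd : nondecreasing_seq Bev.
  by move=> n m nm; apply/subsetPset => x [j jn tj]; exists j => //; exact: leq_trans jn nm.
have cv := nondecreasing_cvg_mu (mu := P) Bev_meas (bigcupT_measurable _ Bev_meas) nd.
rewrite -(cvg_lim _ cv) //; apply: lime_le; first by apply/cvg_ex; eexists; exact: cv.
by apply: nearW => n; exact: Ville_fin.
Qed.

End Ville.

Unset Implicit Arguments.


Section Main.
Context d (T : measurableType d) (R : realType) (P : probability T R) (H : nat)
  (F : nat -> nat -> set (set T)) (X J : nat -> nat -> T -> R) (c : R).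
Hypothesis hF : forall k h, (1 <= k)%N -> (1 <= h <= H)%N -> is_sub_sigma_algebra (F h k).
Hypothesis hFh : forall k h, (1 <= k)%N -> (1 <= h < H)%N -> F h k `<=` F h.+1 k.
Hypothesis hFk : forall k, (1 <= k)%N -> F H k `<=` F 1%N k.+1.
Hypothesis hXm : forall k h, (1 <= k)%N -> (1 <= h <= H)%N -> G_measurable (F h k) (X h k).
Hypothesis hX0 : forall k h x, (1 <= k)%N -> (1 <= h <= H)%N -> 0 <= X h k x.
Hypothesis hc : 0 < c.
Hypothesis hJH : forall k x, (1 <= k)%N -> J H.+1 k x = 0.
Hypothesis hJ : forall k h, (1 <= k)%N -> (1 <= h <= H)%N ->
     exists Y : T -> R, cond_exp_version P (F h k) (J h.+1 k) Y /\
       forall x, J h k x = Num.min (X h k x + Y x) c.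
Hypothesis H0 : (0 < H)%N.

Local Notation l := ((2 * c)^-1).

Lemma sF {k h} : (1 <= k)%N -> (1 <= h <= H)%N -> sigma_algebra setT (F h k).
Proof. by move=> k1 hh; case: (hF k h k1 hh). Qed.

Lemma FT {k h} : (1 <= k)%N -> (1 <= h <= H)%N -> F h k `<=` measurable.
Proof. by move=> k1 hh; case: (hF k h k1 hh). Qed.

Lemma Fmon_h {k h h'} : (1 <= k)%N -> (1 <= h)%N -> (h <= h')%N -> (h' <= H)%N ->
  F h k `<=` F h' k.
Proof.
move=> k1 h1; elim: h' => [|h' IH] hh' h'H.
  by move: hh'; rewrite leqn0 => /eqP h0; move: h1; rewrite h0.
move: hh'; rewrite leq_eqVlt => /orP[/eqP -> //|].
rewrite ltnS => hh'.
apply: subset_trans (IH hh' (ltnW h'H)) (hFh k h' k1 _).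
by rewrite h'H andbT (leq_trans h1 hh').
Qed.

Lemma Fmon_k {k k'} : (1 <= k)%N -> (k <= k')%N -> F 1%N k `<=` F 1%N k'.
Proof.
move=> k1; elim: k' => [|k' IH] kk'.
  by move: kk'; rewrite leqn0 => /eqP k0; move: k1; rewrite k0.
move: kk'; rewrite leq_eqVlt => /orP[/eqP -> //|].
rewrite ltnS => kk'.
have k'1 : (1 <= k')%N := leq_trans k1 kk'.
apply: subset_trans (IH kk') _.
apply: subset_trans (hFk k' k'1).
exact: Fmon_h.
Qed.

Lemma Fin {i h k} : (1 <= i)%N -> (i <= k)%N -> (1 <= h <= H)%N -> F h i `<=` F 1%N k.+1.
Proof.
move=> i1 ik /andP[h1 hH].
apply: subset_trans (@Fmon_h i h H i1 h1 hH (leqnn H)) _.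
apply: subset_trans (hFk i i1) _.
exact: Fmon_k.
Qed.

Lemma Xm {k h} : (1 <= k)%N -> (1 <= h <= H)%N -> Gm (F h k) (X h k).
Proof. by move=> k1 hh; apply/(GmP _ (sF k1 hh))/hXm. Qed.

Lemma Jm {k h} : (1 <= k)%N -> (1 <= h <= H)%N -> Gm (F h k) (J h k).
Proof.
move=> k1 hh.
have [Y [[GY iY hYZ] eJ]] := hJ k h k1 hh.
rewrite (_ : J h k = fun x => Num.min (X h k x + Y x) c); last exact/funext.
apply: measurable_minr; last exact: measurable_cst.
apply: measurable_funD; first exact: Xm.
exact/(GmP _ (sF k1 hh)).
Qed.

Lemma Jmeas {k h} : (1 <= k)%N -> (1 <= h <= H.+1)%N -> measurable_fun setT (J h k).
Proof.
move=> k1 /andP[h1]; rewrite leq_eqVlt => /orP[/eqP ->|].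
  rewrite (_ : J H.+1 k = cst 0); first exact: measurable_cst.
  by apply/funext => x; rewrite hJH.
rewrite ltnS => hH.
have hh : (1 <= h <= H)%N by rewrite h1 hH.
exact: Gm_meas (sF k1 hh) (FT k1 hh) (Jm k1 hh).
Qed.

Lemma Jc {k h} x : (1 <= k)%N -> (1 <= h <= H.+1)%N -> J h k x <= c.
Proof.
move=> k1 /andP[h1]; rewrite leq_eqVlt => /orP[/eqP ->|].
  by rewrite hJH // ltW.
rewrite ltnS => hH.
have hh : (1 <= h <= H)%N by rewrite h1 hH.
have [Y [_ eJ]] := hJ k h k1 hh.
by rewrite eJ ge_min lexx orbT.
Qed.

Lemma Jint {k h} : (1 <= k)%N -> (1 <= h <= H.+1)%N -> P.-integrable setT (EFin \o J h k).
Proof.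
move=> k1 hh0; have := hh0; move=> /andP[h1]; rewrite leq_eqVlt => /orP[/eqP hE|].
  apply: eq_integrable (integrable0 _ _) => //= x _.
  by rewrite hE hJH.
rewrite ltnS => hH.
have hh : (1 <= h <= H)%N by rewrite h1 hH.
have [Y [[GY iY hYZ] eJ]] := hJ k h k1 hh.
have ig : P.-integrable setT (EFin \o (fun x => `|Y x| + c)).
  have := integrableD measurableT (integrable_norm iY) (finite_measure_integrable_cst P c measurableT).
  by apply: eq_integrable => // x _.
apply: le_integrable ig => //.
  exact/measurable_EFinP/(Jmeas k1 hh0).
move=> x _ /=; rewrite lee_fin eJ.
have Y0 : 0 <= `|Y x| := normr_ge0 _.
have X0 : 0 <= X h k x := hX0 k h x k1 hh.
have m1 : Num.min (X h k x + Y x) c <= c by rewrite ge_min lexx orbT.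
have m2 : - `|Y x| <= Num.min (X h k x + Y x) c.
  rewrite le_min; apply/andP; split.
    by have := ler_norm (- Y x); rewrite normrN => h2; lra.
  by rewrite (le_trans _ (ltW hc)) // oppr_le0.
rewrite [X in _ <= X]ger0_norm; last lra.
set m := Num.min _ _ in m1 m2 *; set y := `|Y x| in Y0 m2 *.
rewrite ler_norml; apply/andP; split.
  by apply: le_trans m2; rewrite lerN2 lerDl ltW.
by apply: le_trans m1 _; rewrite lerDr.
Qed.

Definition Sx k x := \sum_(1 <= j < k.+1) (J 1%N j x - 2 * \sum_(1 <= h < H.+1) X h j x).
Definition N k x := expR (l * Sx k x).

Lemma Sx_rec j x : Sx j.+1 x = Sx j x + (J 1%N j.+1 x - 2 * \sum_(1 <= h < H.+1) X h j.+1 x).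
Proof. by rewrite /Sx big_nat_recr. Qed.

Lemma Sx0 x : Sx 0 x = 0.
Proof. by rewrite /Sx big_geq. Qed.

Lemma sumX_ge0 {k} x : (1 <= k)%N -> 0 <= \sum_(1 <= h < H.+1) X h k x.
Proof.
move=> k1; rewrite big_nat_cond; apply: sumr_ge0 => i /andP[/andP[i1 iH] _].
by apply: hX0 => //; rewrite i1 -ltnS.
Qed.

Lemma Sx_le k x : Sx k x <= k%:R * c.
Proof.
elim: k => [|k IH]; first by rewrite Sx0 mul0r.
rewrite Sx_rec -natr1 mulrDl mul1r.
have h11 : (1 <= 1 <= H.+1)%N by [].
have h1 := Jc x (ltn0Sn k) h11.
have h2 := sumX_ge0 x (ltn0Sn k).
lra.
Qed.

Lemma Sx_G {j k} : (j <= k)%N -> Gm (F 1%N k.+1) (Sx j).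
Proof.
elim: j => [|j IH] jk.
  rewrite (_ : Sx 0 = cst 0); first exact: measurable_cst.
  by apply/funext => x; rewrite Sx0.
rewrite (_ : Sx j.+1 = fun x => Sx j x + (J 1%N j.+1 x - 2 * \sum_(1 <= h < H.+1) X h j.+1 x)); last first.
  by apply/funext => x; rewrite Sx_rec.
have s1 : sigma_algebra setT (F 1%N k.+1) by apply: sF => //; rewrite leqnn H0.
apply: measurable_funD; first exact: IH (ltnW jk).
have h1H : (1 <= 1 <= H)%N by rewrite leqnn H0.
apply: measurable_funB.
  apply: Gm_sub (sF (ltn0Sn j) h1H) s1 _ (Jm (ltn0Sn j) h1H).
  exact: Fin.
apply: measurable_funM; first exact: measurable_cst.
apply: msum_nat => i /andP[i1 iH].
have hi : (1 <= i <= H)%N by rewrite i1 -ltnS.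
apply: Gm_sub (sF (ltn0Sn j) hi) s1 _ (Xm (ltn0Sn j) hi).
exact: Fin.
Qed.

Lemma N_G {j k} : (j <= k)%N -> Gm (F 1%N k.+1) (N j).
Proof.
move=> jk; apply: measurableT_comp; first exact: measurable_expR.
apply: measurable_funM; first exact: measurable_cst.
exact: Sx_G.
Qed.

Lemma int_aff (g : T -> R) (a : R) : P.-integrable setT (EFin \o g) ->
  P.-integrable setT (EFin \o (fun x => 1 - a * g x)).
Proof.
move=> ig.
have := integrableB measurableT (finite_measure_integrable_cst P 1 measurableT)
  (integrableZl measurableT a ig).
by apply: eq_integrable => // x _.
Qed.

Lemma Nmeas k : measurable_fun setT (N k).
Proof.
have h1 : (1 <= 1 <= H)%N by rewrite leqnn H0.
exact: Gm_meas (sF (ltn0Sn k) h1) (FT (ltn0Sn k) h1) (N_G (leqnn k)).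
Qed.

Lemma N_le k x : N k x <= expR (l * (k%:R * c)).
Proof.
rewrite /N ler_expR; apply: ler_wpM2l; last exact: Sx_le.
by rewrite invr_ge0 mulr_ge0 // ltW.
Qed.

Definition C k h x := expR (l * Sx k x + l * J 1%N k.+1 x - 2 * l * \sum_(1 <= i < h) X i k.+1 x).
Definition M k (A : set T) h x := C k h x * (1 - l * J h k.+1 x) * \1_A x.

Lemma C_rec k h x : (1 <= h)%N -> C k h.+1 x = C k h x * expR (- (2 * l * X h k.+1 x)).
Proof. by move=> h1; rewrite /C big_nat_recr //= -expRD; congr expR; ring. Qed.

Lemma C_le k h x : (h <= H.+1)%N -> C k h x <= expR (l * (k.+1%:R * c)).
Proof.
move=> hH; rewrite /C ler_expR.
have l0 : 0 < l by rewrite invr_gt0 mulr_gt0.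
have s0 : 0 <= \sum_(1 <= i < h) X i k.+1 x.
  rewrite big_nat_cond; apply: sumr_ge0 => i /andP[/andP[i1 ih] _].
  apply: (hX0 k.+1 i x) => //; rewrite i1 /=; rewrite -ltnS; exact: leq_trans ih hH.
have h11 : (1 <= 1 <= H.+1)%N by [].
have j1 := Jc x (ltn0Sn k) h11.
have sx := Sx_le k x.
have e1 : l * Sx k x <= l * (k%:R * c) by apply: ler_wpM2l => //; exact: ltW.
have e2 : l * J 1%N k.+1 x <= l * c by apply: ler_wpM2l => //; exact: ltW.
have e3 : 0 <= 2 * l * \sum_(1 <= i < h) X i k.+1 x by rewrite mulr_ge0 // mulr_ge0 // ltW.
have -> : l * (k.+1%:R * c) = l * (k%:R * c) + l * c by rewrite -natr1; ring.
lra.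
Qed.

Lemma C_Gg k h g : (1 <= g <= H)%N -> (h <= g.+1)%N -> Gm (F g k.+1) (C k h).
Proof.
move=> /andP[g1 gH] hg.
have gg : (1 <= g <= H)%N by rewrite g1 gH.
have s1 := sF (ltn0Sn k) gg.
have h1H : (1 <= 1 <= H)%N by rewrite leqnn H0.
have F1g : F 1%N k.+1 `<=` F g k.+1 := Fmon_h (ltn0Sn k) (leqnn 1) g1 gH.
apply: measurableT_comp; first exact: measurable_expR.
apply: measurable_funB; first apply: measurable_funD.
- apply: measurable_funM; first exact: measurable_cst.
  exact: Gm_sub (sF (ltn0Sn k) h1H) s1 F1g (Sx_G (leqnn k)).
- apply: measurable_funM; first exact: measurable_cst.
  exact: Gm_sub (sF (ltn0Sn k) h1H) s1 F1g (Jm (ltn0Sn k) h1H).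
apply: measurable_funM; first exact: measurable_cst.
apply: msum_nat => i /andP[i1 ih].
have ig : (i <= g)%N by rewrite -ltnS; exact: leq_trans ih hg.
have hi : (1 <= i <= H)%N by rewrite i1 (leq_trans ig gH).
apply: Gm_sub (sF (ltn0Sn k) hi) s1 _ (Xm (ltn0Sn k) hi).
exact: Fmon_h.
Qed.

Lemma C_meas k h : (h <= H.+1)%N -> measurable_fun setT (C k h).
Proof.
move=> hH.
have hh : (1 <= H <= H)%N by rewrite H0 leqnn.
exact: Gm_meas (sF (ltn0Sn k) hh) (FT (ltn0Sn k) hh) (@C_Gg k h H hh hH).
Qed.

Lemma M_top k A x : M k A H.+1 x = N k.+1 x * \1_A x.
Proof.
rewrite /M hJH // mulr0 subr0 mulr1 /N Sx_rec /C; congr (expR _ * _).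
rewrite mulrDr mulrBr; ring.
Qed.

Lemma M_bot k A x : M k A 1%N x <= N k x * \1_A x.
Proof.
rewrite /M /C big_geq // mulr0 subr0 expRD -/(N k x).
apply: ler_wpM2r; first by rewrite indicE ler0n.
rewrite -mulrA -[X in _ <= X]mulr1; apply: ler_wpM2l; first exact: expR_ge0.
exact: expR_1B.
Qed.

Lemma M_int k A h : measurable A -> (1 <= h <= H.+1)%N ->
  P.-integrable setT (EFin \o M k A h).
Proof.
move=> mA /andP[h1 hH].
have hh : (1 <= h <= H.+1)%N by rewrite h1 hH.
have mf : measurable_fun setT (fun x => C k h x * \1_A x).
  apply: measurable_funM; [exact: C_meas|exact: measurable_indic].
have bf : forall x, `|C k h x * \1_A x| <= expR (l * (k.+1%:R * c)).
  move=> x; rewrite normrM ger0_norm ?expR_ge0 // -[X in _ <= X]mulr1.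
  apply: ler_pM; [exact: expR_ge0|exact: normr_ge0|exact: C_le|].
  by rewrite indicE; case: (_ \in _); rewrite ?normr1 ?normr0.
have := int_bndM mf bf (@int_aff _ l (Jint (ltn0Sn k) hh)).
by apply: eq_integrable => // x _ /=; rewrite /M mulrAC.
Qed.

Lemma M_step k A h : F 1%N k.+1 A -> (1 <= h <= H)%N ->
  \int[P]_x M k A h.+1 x <= \int[P]_x M k A h x.
Proof.
move=> FA hh; have := hh; move=> /andP[h1 hH].
have [Y [[GY iY hYZ] eJ]] := hJ k.+1 h (ltn0Sn k) hh.
have sG := sF (ltn0Sn k) hh.
have GT := FT (ltn0Sn k) hh.
have Ah : F h k.+1 A := Fmon_h (ltn0Sn k) (leqnn 1) h1 hH A FA.
have mA : measurable A := GT A Ah.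
have l0 : 0 < l by rewrite invr_gt0 mulr_gt0.
pose B := expR (l * (k.+1%:R * c)).
pose W x := C k h x * expR (- (2 * l * X h k.+1 x)) * \1_A x.
have GW : Gm (F h k.+1) W.
  apply: measurable_funM; first apply: measurable_funM.
  - by apply: C_Gg => //; exact: leqW.
  - apply: measurableT_comp; first exact: measurable_expR.
    apply: measurable_funN.
    apply: measurable_funM; first exact: measurable_cst.
    exact: Xm.
  - apply: measurable_indic; exact/(Gm_setP A sG).
have mW : measurable_fun setT W := Gm_meas sG GT GW.
have hHS : (h <= H.+1)%N by apply: leq_trans hH _.
have Wb : forall x, 0 <= W x <= B.
  move=> x; rewrite /W; apply/andP; split.
    by rewrite !mulr_ge0 ?expR_ge0 // indicE ler0n.
  have e1 : expR (- (2 * l * X h k.+1 x)) <= 1.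
    rewrite -[X in _ <= X]expR0 ler_expR oppr_le0 mulr_ge0 //; last exact: (hX0 k.+1 h x).
    by rewrite mulr_ge0 // ltW.
  have i1 : \1_A x <= 1 :> R by rewrite indicE; case: (_ \in _).
  have i0 : 0 <= \1_A x :> R by rewrite indicE ler0n.
  have cB : C k h x <= B := C_le k h x hHS.
  rewrite -mulrA; apply: (@le_trans _ _ (B * 1)); last by rewrite mulr1.
  apply: ler_pM; [exact: expR_ge0|by rewrite mulr_ge0 ?expR_ge0|exact: cB|].
  apply: (@le_trans _ _ (1 * 1)); last by rewrite mulr1.
  by apply: ler_pM => //; exact: expR_ge0.
have Wabs : forall x, `|W x| <= B.
  by move=> x; case/andP: (Wb x) => w0 wB; rewrite ger0_norm.
have hh1 : (1 <= h.+1 <= H.+1)%N by apply/andP; split; [|rewrite ltnS].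
have iJ := Jint (ltn0Sn k) hh1.
have -> : \int[P]_x M k A h.+1 x = \int[P]_x (W x * (1 - l * J h.+1 k.+1 x)).
  apply: eq_Rintegral => x _; rewrite /M /W C_rec //; ring.
rewrite (Rint_aff l mW Wabs iJ).
rewrite -(pullout sG GT iY iJ hYZ GW Wb).
rewrite -(Rint_aff l mW Wabs iY).
have hh2 : (1 <= h <= H.+1)%N by rewrite h1.
apply: le_Rintegral => //.
- exact: int_bndM mW Wabs (@int_aff _ l iY).
- exact: M_int.
move=> x _; rewrite /W /M eJ.
have k0 := key_ineq (Y x) hc (hX0 k.+1 h x (ltn0Sn k) hh).
move: k0; set Cx := C k h x; set e := expR _; set I := \1_A x; set a := 1 - l * Y x.
set b := 1 - _ => k0.
have -> : Cx * e * I * a = (Cx * I) * (e * a) by ring.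
have -> : Cx * b * I = (Cx * I) * b by ring.
apply: ler_wpM2l => //.
by rewrite mulr_ge0 ?expR_ge0 // /I indicE ler0n.
Qed.

Lemma M_chain k A h : F 1%N k.+1 A -> (1 <= h <= H.+1)%N ->
  \int[P]_x M k A h x <= \int[P]_x M k A 1%N x.
Proof.
move=> FA; elim: h => [//|h IH] /andP[_ hH].
case: (posnP h) => [->//|h0].
apply: le_trans (IH _).
  by apply: M_step => //; rewrite h0 -ltnS.
by rewrite h0 /= (leq_trans _ hH).
Qed.

Lemma ep_step k A : F 1%N k.+1 A ->
  \int[P]_x (N k.+1 x * \1_A x) <= \int[P]_x (N k x * \1_A x).
Proof.
move=> FA.
have h1H : (1 <= 1 <= H)%N by rewrite leqnn H0.
have mA : measurable A := FT (ltn0Sn k) h1H A FA.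
rewrite (_ : \int[P]_x (N k.+1 x * \1_A x) = \int[P]_x M k A H.+1 x); last by apply: eq_Rintegral => x _; rewrite M_top.
have hHH : (1 <= H.+1 <= H.+1)%N by rewrite leqnn.
apply: le_trans (M_chain k A H.+1 FA hHH) _.
apply: le_Rintegral => //.
- apply: M_int => //.
- have mf : measurable_fun setT (fun x => N k x * \1_A x).
    by apply: measurable_funM; [exact: Nmeas|exact: measurable_indic].
  have bf : forall x, `|N k x * \1_A x| <= expR (l * (k%:R * c)).
    move=> x; rewrite normrM ger0_norm ?expR_ge0 //.
    apply: (@le_trans _ _ (expR (l * (k%:R * c)) * 1)); last by rewrite mulr1.
    apply: ler_pM; [exact: expR_ge0|exact: normr_ge0|exact: N_le|].
    by rewrite indicE; case: (_ \in _); rewrite ?normr1 ?normr0.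
  exact: (int_bnd P mf bf).
by move=> x _; exact: M_bot.
Qed.

Lemma main_conc delta : 0 < delta <= 1 ->
  exists E : set T, [/\ measurable E, ((1 - delta)%:E <= P E)%E &
    forall x, E x -> forall K : nat,
      \sum_(1 <= k < K.+1) J 1%N k x
      <= 2 * \sum_(1 <= k < K.+1) \sum_(1 <= h < H.+1) X h k x
         + 6 * c * ln (2 / delta)].
Proof.
move=> /andP[d0 d1].
have t0 : 0 < delta^-1 by rewrite invr_gt0.
have h1H : (1 <= 1 <= H)%N by rewrite leqnn H0.
have sGs k : sigma_algebra setT (F 1%N k.+1) := sF (ltn0Sn k) h1H.
have GsT k : F 1%N k.+1 `<=` measurable := FT (ltn0Sn k) h1H.
have N0 x : N 0 x = 1 by rewrite /N Sx0 mulr0 expR0.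
have Nge0 k x : 0 <= N k x := expR_ge0 _.
have Nb k : exists b, forall x, N k x <= b by exists (expR (l * (k%:R * c))) => x; exact: N_le.
have NG j k : (j <= k)%N -> Gm (F 1%N k.+1) (N j) by move=> jk; exact: N_G.
have Nsup k A : F 1%N k.+1 A ->
    \int[P]_x (N k.+1 x * \1_A x) <= \int[P]_x (N k x * \1_A x) by exact: ep_step.
have V := Ville sGs GsT t0 N0 Nge0 Nb NG Nsup.
have mB := Bev_meas sGs GsT (delta^-1) NG.
have mU : measurable (\bigcup_K Bev N (delta^-1) K) := bigcupT_measurable _ mB.
exists (~` \bigcup_K Bev N (delta^-1) K); split.
- exact: measurableC.
- rewrite probability_setC //.
  move: V; rewrite invrK -(fineK (fin_num_measure P _ mU)) -EFinB !lee_fin => V.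
  lra.
move=> x /= nU K.
have nB : ~ Bev N (delta^-1) K x by move=> h; apply: nU; exists K.
have NK : N K x < delta^-1.
  by rewrite ltNge; apply/negP => h; apply: nB; exists K.
move: NK; rewrite /N -ltr_ln ?posrE ?expR_gt0 // expRK.
rewrite /Sx sumrB -mulr_sumr.
set a := \sum_(1 <= k < K.+1) J 1%N k x.
set b := \sum_(1 <= k < K.+1) \sum_(1 <= h < H.+1) X h k x.
have c2 : 0 < 2 * c by rewrite mulr_gt0.
rewrite mulrC ltr_pdivrMr // => h.
have L0 : 0 <= ln delta^-1 by apply: ln_ge0; rewrite invf_ge1.
have L2 : 0 <= ln (2 : R) by apply: ln_ge0; rewrite ler1n.
rewrite lnM ?posrE // ?invr_gt0 //.
have e1 : 0 <= c * ln (2 : R) by rewrite mulr_ge0 // ltW.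
have e2 : 0 <= c * ln delta^-1 by rewrite mulr_ge0 // ltW.
nra.
Qed.

End Main.

Theorem lemma2 (d : measure_display) (T : measurableType d) (R : realType)
  (P : probability T R) (H : nat)
  (F : nat -> nat -> set (set T)) (X J : nat -> nat -> T -> R) (c delta : R) :
  (forall k h, (1 <= k)%N -> (1 <= h <= H)%N -> is_sub_sigma_algebra (F h k)) ->
  (forall k h, (1 <= k)%N -> (1 <= h < H)%N -> F h k `<=` F h.+1 k) ->
  (forall k, (1 <= k)%N -> F H k `<=` F 1%N k.+1) ->
  (forall k h, (1 <= k)%N -> (1 <= h <= H)%N -> G_measurable (F h k) (X h k)) ->
  (forall k h x, (1 <= k)%N -> (1 <= h <= H)%N -> 0 <= X h k x) ->
  0 < c ->
  (forall k x, (1 <= k)%N -> J H.+1 k x = 0) ->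
  (forall k h, (1 <= k)%N -> (1 <= h <= H)%N ->
     exists Y : T -> R, cond_exp_version P (F h k) (J h.+1 k) Y /\
       forall x, J h k x = Num.min (X h k x + Y x) c) ->
  0 < delta <= 1 ->
  exists E : set T, [/\ measurable E, ((1 - delta)%:E <= P E)%E &
    forall x, E x -> forall K : nat,
      \sum_(1 <= k < K.+1) J 1%N k x
      <= 2 * \sum_(1 <= k < K.+1) \sum_(1 <= h < H.+1) X h k x
         + 6 * c * ln (2 / delta)].

Proof.
move=> hF hFh hFk hXm hX0 hc hJH hJ hd.
case: (posnP H) => [H0|H0]; last first.
  exact: (@main_conc d T R P H F X J c hF hFh hFk hXm hX0 hc hJH hJ H0 delta hd).
case/andP: hd => d0 d1.
have L0 : 0 <= ln (2 / delta).
  apply: ln_ge0; rewrite ler_pdivlMr // mul1r.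
  by apply: le_trans d1 _; rewrite ler1n.
exists setT; split => //.
  by rewrite probability_setT lee_fin lerBlDr lerDl ltW.
move=> x _ K.
rewrite big_nat_cond big1; last first.
  by move=> k /andP[/andP[k1 _] _]; have := hJH k x k1; rewrite H0.
rewrite (eq_bigr (fun _ => 0)); last by move=> k _; rewrite H0 big_geq.
rewrite big1_eq mulr0 add0r.
by rewrite mulr_ge0 // mulr_ge0 // ltW.
Qed.
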